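(* Let $1\le k\le d$, $\epsilon>0$, let $P\subset\mathbb{R}^d$ be a finite point set, and let $c(P)$ be the output of the Local Search algorithm (defined in the context) run on $P$ with parameters $k$ and $\epsilon$. Then for every $(k-1)$-dimensional linear subspace $\mathcal{H}$ of $\mathbb{R}^d$, $$h(c(P),\mathcal{H})\ge\frac{h(P,\mathcal{H})}{2k(1+\epsilon)}.$$
   Context: For a finite set $S\subset\mathbb{R}^d$ with $|S|=j$, $\mathrm{VOL}(S)$ denotes the $j$-dimensional volume of the parallelepiped spanned by the vectors of $S$. For a set $\mathcal{C}$ and points $p,q$, $\mathcal{C}+q-p$ denotes $(\mathcal{C}\setminus\{p\})\cup\{q\}$. The Local Search algorithm on input $P$, $k$, $\epsilon$: initialize $\mathcal{C}=\emptyset$; for $i=1,\dots,k$ add to $\mathcal{C}$ a point $\arg\max_{p\in P\setminus\mathcal{C}}\mathrm{VOL}(\mathcal{C}\cup\{p\})$; then repeat: if there are $q\in P\setminus\mathcal{C}$ and $p\in\mathcal{C}$ with $\mathrm{VOL}(\mathcal{C}+q-p)\ge(1+\epsilon)\mathrm{VOL}(\mathcal{C})$, replace $p$ by $q$; until no such pair exists; output $\mathcal{C}$. For a point set $Q$ and a subspace $\mathcal{H}$, $h(Q,\mathcal{H})=\max_{p\in Q}\mathrm{dist}(p,\mathcal{H})$, where $\mathrm{dist}(p,\mathcal{H})$ is the Euclidean distance from $p$ to $\mathcal{H}$ (the $k$-directional height). *)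

(* Defs.v *)
From HB Require Import structures.
From mathcomp Require Import all_boot all_order all_algebra.
From mathcomp Require Import finmap.
From mathcomp Require Import boolp classical_sets reals.
From Stdlib Require Import Relations.
Set Implicit Arguments. Unset Strict Implicit. Unset Printing Implicit Defensive.
Import Order.TTheory GRing.Theory Num.Theory.
Local Open Scope ring_scope.
Local Open Scope fset_scope.

Section LocalSearch.
Variables (R : realType) (d : nat).
Notation pt := 'rV[R]_d.

Definition enorm (v : pt) : R := Num.sqrt (\sum_(i < d) v ord0 i ^+ 2).

Definition vecs_mx (s : seq pt) : 'M[R]_(size s, d) :=
  \matrix_(i < size s) nth 0 s i.

(* |S|-dimensional volume of the parallelepiped spanned by S:
   square root of the Gram determinant *)
Definition VOL (S : {fset pt}) : R :=
  let M := vecs_mx (enum_fset S) in Num.sqrt (\det (M *m M^T)).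

Definition greedy_step (P C C' : {fset pt}) : Prop :=
  exists p, [/\ p \in P, p \notin C, C' = p |` C &
    forall q, q \in P -> q \notin C -> VOL (q |` C) <= VOL (p |` C)].

Inductive greedy_reach (P : {fset pt}) : nat -> {fset pt} -> Prop :=
| greedy0 : greedy_reach P 0 fset0
| greedyS n C C' : greedy_reach P n C -> greedy_step P C C' ->
    greedy_reach P n.+1 C'.

Definition swap_step (P : {fset pt}) (eps : R) (C C' : {fset pt}) : Prop :=
  exists q p, [/\ q \in P, q \notin C, p \in C,
    C' = q |` (C `\ p) & VOL C' >= (1 + eps) * VOL C].

Definition LS_output (P : {fset pt}) (k : nat) (eps : R) (C : {fset pt}) : Prop :=
  exists C0, [/\ greedy_reach P k C0,
    clos_refl_trans _ (swap_step P eps) C0 C &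
    ~ (exists C', swap_step P eps C C')].

Definition dist (p : pt) (H : 'M[R]_d) : R :=
  inf [set enorm (p - h) | h in [set h : pt | (h <= H)%MS]].

Definition height (Q : {fset pt}) (H : 'M[R]_d) : R :=
  \big[Num.max/0]_(p <- enum_fset Q) dist p H.

End LocalSearch.

(* Main.v *)
Require Import Defs.
From HB Require Import structures.
From mathcomp Require Import all_boot all_order all_algebra.
From mathcomp Require Import finmap.
From mathcomp Require Import boolp classical_sets reals.
From mathcomp Require Import ring lra perm zify.
From Stdlib Require Import Relations.
Import Order.TTheory GRing.Theory Num.Theory.
Local Open Scope ring_scope.
Set Implicit Arguments. Unset Strict Implicit. Unset Printing Implicit Defensive.
Section LA.
Variables (R : realType) (d : nat).
Local Notation pt := 'rV[R]_d.
Implicit Types u v w : pt.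

Definition dot (u v : pt) : R := (u *m v^T) 0 0.
Definition nsq (u : pt) := dot u u.

Lemma dotE u v : dot u v = \sum_(i<d) u 0 i * v 0 i.
Proof. by rewrite /dot mxE; apply: eq_bigr => i _; rewrite mxE. Qed.

Lemma dotC u v : dot u v = dot v u.
Proof. by rewrite !dotE; apply: eq_bigr => i _; rewrite mulrC. Qed.

Lemma dotDl u v w : dot (u + v) w = dot u w + dot v w.
Proof. by rewrite /dot mulmxDl mxE. Qed.

Lemma dotZl a u w : dot (a *: u) w = a * dot u w.
Proof. by rewrite /dot -scalemxAl mxE. Qed.

Lemma dotNl u w : dot (- u) w = - dot u w.
Proof. by rewrite -scaleN1r dotZl mulN1r. Qed.

Lemma dotDr u v w : dot w (u + v) = dot w u + dot w v.
Proof. by rewrite dotC dotDl !(dotC w). Qed.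

Lemma dotZr a u w : dot w (a *: u) = a * dot w u.
Proof. by rewrite dotC dotZl dotC. Qed.

Lemma dotNr u w : dot w (- u) = - dot w u.
Proof. by rewrite dotC dotNl dotC. Qed.

Lemma dot0l u : dot 0 u = 0.
Proof. by rewrite /dot mul0mx mxE. Qed.

Lemma nsq_ge0 u : 0 <= nsq u.
Proof. by rewrite /nsq dotE; apply: sumr_ge0 => i _; rewrite -expr2 sqr_ge0. Qed.

Lemma nsq_eq0 u : nsq u = 0 -> u = 0.
Proof.
rewrite /nsq dotE => /psumr_eq0P h.
apply/matrixP => i j; rewrite (ord1 i) mxE.
have /eqP := h (fun i _ => (ltac:(by rewrite -expr2 sqr_ge0))) j isT.
by rewrite mulf_eq0 orbb => /eqP.
Qed.

Lemma enormE u : enorm u = Num.sqrt (nsq u).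
Proof. by rewrite /enorm /nsq dotE; congr Num.sqrt; apply: eq_bigr => i _; rewrite expr2. Qed.

Lemma enorm_ge0 u : 0 <= enorm u.
Proof. by rewrite enormE sqrtr_ge0. Qed.

Lemma sqr_enorm u : enorm u ^+ 2 = nsq u.
Proof. by rewrite enormE sqr_sqrtr // nsq_ge0. Qed.

Lemma nsqD u v : nsq (u + v) = nsq u + 2 * dot u v + nsq v.
Proof. rewrite /nsq !dotDl !dotDr (dotC v u); ring. Qed.

Lemma nsqB u v : nsq (u - v) = nsq u - 2 * dot u v + nsq v.
Proof. rewrite /nsq !dotDl !dotDr !dotNl !dotNr (dotC v u); ring. Qed.

Lemma pythag u v : dot u v = 0 -> nsq (u + v) = nsq u + nsq v.
Proof. by move=> h; rewrite nsqD h mulr0 addr0. Qed.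

Lemma nsqZ a u : nsq (a *: u) = a ^+ 2 * nsq u.
Proof. rewrite /nsq dotZl dotZr; ring. Qed.

Lemma CS u v : dot u v ^+ 2 <= nsq u * nsq v.
Proof.
have [u0|nu0] := eqVneq (nsq u) 0.
  by rewrite (nsq_eq0 u0) dot0l /nsq dot0l mul0r expr0n.
have Qp : 0 < nsq u by rewrite lt_def nu0 nsq_ge0.
have := nsq_ge0 (nsq u *: v - dot u v *: u).
rewrite nsqB !nsqZ dotZl dotZr (dotC v u) /nsq => h.
have : 0 <= dot u u * (dot u u * dot v v - dot u v ^+ 2).
  by move: h; congr (_ <= _); ring.
by rewrite pmulr_rge0 // subr_ge0.
Qed.

Lemma dot_le u v : dot u v <= enorm u * enorm v.
Proof.
rewrite !enormE -sqrtrM ?nsq_ge0 //.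
apply: le_trans (ler_norm _) _.
by rewrite -sqrtr_sqr ler_wsqrtr // CS.
Qed.

Lemma enormD u v : enorm (u + v) <= enorm u + enorm v.
Proof.
have h : nsq (u + v) <= (enorm u + enorm v) ^+ 2.
  rewrite nsqD sqrrD !sqr_enorm lerD2r lerD2l.
  idtac.
  have := dot_le u v; lra.
rewrite enormE -(ger0_norm (addr_ge0 (enorm_ge0 u) (enorm_ge0 v))) -sqrtr_sqr.
exact: ler_wsqrtr.
Qed.

Lemma enormZ a u : enorm (a *: u) = `|a| * enorm u.
Proof. by rewrite !enormE nsqZ sqrtrM ?sqr_ge0 // sqrtr_sqr. Qed.

Lemma enorm_sum n (f : 'I_n -> pt) : enorm (\sum_(i < n) f i) <= \sum_(i < n) enorm (f i).
Proof.
elim/big_rec2: _ => [|i y1 y2 _ h]; first by rewrite enormE /nsq dot0l sqrtr0.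
by apply: le_trans (enormD _ _) _; rewrite lerD2l.
Qed.

Lemma enorm_le u v : nsq u <= nsq v -> enorm u <= enorm v.
Proof. by rewrite !enormE => /ler_wsqrtr. Qed.

End LA.
Section Res.
Variables (R : realType) (d : nat).
Local Notation pt := 'rV[R]_d.
Implicit Types u v w x y : pt.

Definition PiN m (N : 'M[R]_(m, d)) : 'M[R]_d := N^T *m invmx (N *m N^T) *m N.
Arguments PiN {m}.
Definition res m (N : 'M[R]_(m, d)) x : pt := x *m (1%:M - PiN N).
Arguments res {m}.

Lemma resE m (N : 'M[R]_(m, d)) x : res N x = x - x *m PiN N.
Proof. by rewrite /res mulmxBr mulmx1. Qed.

Lemma resD m (N : 'M[R]_(m, d)) x y : res N (x + y) = res N x + res N y.
Proof. by rewrite /res mulmxDl. Qed.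
Lemma resB m (N : 'M[R]_(m, d)) x y : res N (x - y) = res N x - res N y.
Proof. by rewrite /res mulmxBl. Qed.
Lemma resZ m (N : 'M[R]_(m, d)) a x : res N (a *: x) = a *: res N x.
Proof. by rewrite /res scalemxAl. Qed.
Lemma res_sum m (N : 'M[R]_(m, d)) n (f : 'I_n -> pt) :
  res N (\sum_(i < n) f i) = \sum_(i < n) res N (f i).
Proof. by rewrite /res mulmx_suml. Qed.

Lemma proj_sub m (N : 'M[R]_(m, d)) x : (x *m PiN N <= N)%MS.
Proof. by rewrite /PiN !mulmxA submxMl. Qed.

Lemma orth_sub m n (N : 'M[R]_(m, d)) (y : 'M[R]_(n, d)) x :
  x *m N^T = 0 -> (y <= N)%MS -> x *m y^T = 0.
Proof. by move=> h /submxP [D ->]; rewrite trmx_mul mulmxA h mul0mx. Qed.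

Section U.
Variables (m : nat) (N : 'M[R]_(m, d)).
Hypothesis uN : N *m N^T \in unitmx.

Lemma res_orthN x : res N x *m N^T = 0.
Proof.
by rewrite resE mulmxBl /PiN !mulmxA -(mulmxA _ N) mulmxKV // subrr.
Qed.

Lemma res_orth x n (y : 'M[R]_(n, d)) : (y <= N)%MS -> res N x *m y^T = 0.
Proof. by move=> yN; apply: orth_sub (res_orthN x) yN. Qed.

Lemma res_orth_dot x y : (y <= N)%MS -> dot (res N x) y = 0.
Proof. by move=> /submxP [D ->]; rewrite /dot trmx_mul mulmxA res_orthN mul0mx mxE. Qed.

Lemma res_sub0 y : (y <= N)%MS -> res N y = 0.
Proof.
move=> /submxP [D ->]; rewrite resE /PiN !mulmxA -(mulmxA D N) mulmxK //.
by rewrite subrr.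
Qed.

Lemma res_eq x y : (x - y <= N)%MS -> res N x = res N y.
Proof. by move=> /res_sub0; rewrite resB => /eqP; rewrite subr_eq0 => /eqP. Qed.

Lemma res_id x : x *m N^T = 0 -> res N x = x.
Proof. by move=> h; rewrite resE /PiN !mulmxA h !mul0mx subr0. Qed.

Lemma res_min x y : (y <= N)%MS -> nsq (res N x) <= nsq (x - y).
Proof.
move=> yN.
have -> : x - y = res N x + (x *m PiN N - y) by rewrite resE; rewrite addrA subrK.
rewrite pythag ?lerDl ?nsq_ge0 //.
by apply: res_orth_dot; rewrite addmx_sub ?proj_sub // eqmx_opp.
Qed.

Lemma res_le x : nsq (res N x) <= nsq x.
Proof. by have := res_min x (sub0mx 1 N); rewrite subr0. Qed.

Lemma res_sub x : (x - res N x <= N)%MS.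
Proof. by rewrite resE opprB addrC subrK proj_sub. Qed.

End U.

Lemma schur m (N : 'M[R]_(m, d)) v : N *m N^T \in unitmx ->
  \det (col_mx v N *m (col_mx v N)^T) = nsq (res N v) * \det (N *m N^T).
Proof.
move=> uN.
set a := v *m N^T *m invmx (N *m N^T).
have ev : col_mx v N = block_mx 1%:M a 0 1%:M *m col_mx (res N v) N.
  by rewrite mul_block_col !mul1mx mul0mx add0r resE /PiN !mulmxA subrK.
rewrite ev trmx_mul.
set E := block_mx _ _ _ _; set X := col_mx _ _.
have -> : E *m X *m (X^T *m E^T) = E *m (X *m X^T) *m E^T by rewrite !mulmxA.
rewrite !det_mulmx det_tr /E /X det_ublock !det1 !mul1r mulr1.
have h2 : N *m (res N v)^T = 0 by rewrite -[X in X *m _](trmxK N) -trmx_mul res_orthN // trmx0.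
rewrite tr_col_mx mul_col_row res_orthN // h2.
by rewrite det_ublock det_mx11.
Qed.

Lemma unit_gram m (A : 'M[R]_(m, d)) :
  (A *m A^T \in unitmx) <-> (forall x : 'rV_m, x *m A = 0 -> x = 0).
Proof.
split.
  move=> uA x hx; rewrite -(mulmxK uA x) mulmxA hx !mul0mx //.
move=> h; rewrite unitmxE unitfE; apply/negP => /det0P [x xn0 hx].
have : nsq (x *m A) = 0 by rewrite /nsq /dot trmx_mul !mulmxA -(mulmxA x) hx mul0mx mxE.
by move/nsq_eq0/h => x0; move: xn0; rewrite x0 eqxx.
Qed.

Lemma unit_gram_col m (N : 'M[R]_(m, d)) v :
  col_mx v N *m (col_mx v N)^T \in unitmx -> N *m N^T \in unitmx.
Proof.
move=> /unit_gram h; apply/unit_gram => x hx.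
have /h : row_mx 0 x *m col_mx v N = 0 by rewrite mul_row_col mul0mx add0r hx.
by move/eqP; rewrite row_mx_eq0 => /andP [_ /eqP].
Qed.

End Res.
Section Seqs.
Variables (R : realType) (d : nat).
Local Notation pt := 'rV[R]_d.

Definition G (s : seq pt) := \det (vecs_mx s *m (vecs_mx s)^T).

Lemma VOLE (S : {fset pt}) : VOL S = Num.sqrt (G (enum_fset S)).
Proof. by []. Qed.

Lemma vecs_cons (v : pt) (s : seq pt) : vecs_mx (v :: s) = col_mx v (vecs_mx s).
Proof.
apply/matrixP => i j; rewrite [RHS]mxE.
case: (splitP (i : 'I_(1 + size s))) => k hk; rewrite !mxE hk //.
by rewrite (ord1 k).
Qed.

Lemma row_vecs (s : seq pt) (i : 'I_(size s)) : row i (vecs_mx s) = nth 0 s i.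
Proof. by rewrite rowK. Qed.

Lemma mem_vecs (v : pt) (s : seq pt) : v \in s -> (v <= vecs_mx s)%MS.
Proof.
move=> vs; have ilt : (index v s < size s)%N by rewrite index_mem.
have := row_sub (Ordinal ilt) (vecs_mx s).
by rewrite row_vecs /= nth_index.
Qed.

Definition gramf n (f : 'I_n -> pt) :=
  \det ((\matrix_(i < n) f i) *m (\matrix_(i < n) f i)^T).

Lemma gram_cast (s : seq pt) n (f : 'I_n -> pt) :
  size s = n -> (forall i : 'I_n, nth 0 s i = f i) -> G s = gramf f.
Proof.
move=> e; move: f; case: n / e => f hf.
rewrite /G /gramf /vecs_mx; congr (\det (_ *m _^T)); apply/matrixP => i j;
by rewrite !mxE hf.
Qed.

Lemma gram_perm n (p : 'S_n) (f : 'I_n -> pt) : gramf (fun i => f (p i)) = gramf f.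
Proof.
rewrite /gramf.
have -> : \matrix_(i < n) f (p i) = perm_mx p *m \matrix_(i < n) f i.
  by rewrite -row_permE; apply/matrixP => i j; rewrite !mxE.
set M := \matrix_(i < n) f i; set P := perm_mx p.
rewrite trmx_mul.
have -> : P *m M *m (M^T *m P^T) = P *m (M *m M^T) *m P^T by rewrite !mulmxA.
rewrite !det_mulmx det_tr det_perm.
by case: (odd_perm p) => /=; rewrite ?expr1 ?expr0 ?mul1r ?mulr1 ?mulN1r ?mulrN1 ?opprK.
Qed.

Lemma G_perm (s t : seq pt) : perm_eq s t -> G s = G t.
Proof.
move=> hst; pose tt := in_tuple t.
have /tuple_permP [p hs] : perm_eq s tt by [].
rewrite (@gram_cast s (size t) (fun i => tnth tt (p i))); last first.
- by move=> i; rewrite hs -tnth_nth tnth_mktuple.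
- by rewrite hs size_tuple.
rewrite gram_perm; symmetry; apply: gram_cast => // i.
by rewrite (tnth_nth 0).
Qed.

End Seqs.
Section Dist.
Local Open Scope classical_set_scope.
Variables (R : realType) (d : nat).
Local Notation pt := 'rV[R]_d.

Lemma unit_row_base (H : 'M[R]_d) :
  row_base H *m (row_base H)^T \in unitmx.
Proof.
apply/unit_gram => x /eqP; rewrite mulmx_free_eq0 ?row_base_free //.
by move/eqP.
Qed.

Lemma distE (p : pt) (H : 'M[R]_d) : dist p H = enorm (res (row_base H) p).
Proof.
set B := row_base H.
have uB : B *m B^T \in unitmx by exact: unit_row_base.
set S := [set enorm (p - h) | h in [set h : pt | (h <= H)%MS]].
have mS : S (enorm (res B p)).
  exists (p *m PiN B); last by rewrite resE.
  by rewrite /= -(eq_row_base H) proj_sub.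
have lb : lbound S (enorm (res B p)).
  move=> _ [h /= hH <-]; apply: enorm_le; apply: res_min => //.
  by rewrite /B (eq_row_base H).
apply/eqP; rewrite eq_le; apply/andP; split.
  apply: ge_inf => //; exists 0 => _ [h _ <-]; exact: enorm_ge0.

by apply: lb_le_inf lb; exists (enorm (res B p)).
Qed.

Lemma dist_ge0 (p : pt) H : 0 <= dist p H.
Proof. by rewrite distE enorm_ge0. Qed.

Lemma height_ge0 (Q : {fset pt}) H : 0 <= height Q H.
Proof.
rewrite /height; elim: (enum_fset Q) => [|x s IH]; first by rewrite big_nil.
by rewrite big_cons le_max IH orbT.
Qed.

Lemma le_height (Q : {fset pt}) H p : p \in Q -> dist p H <= height Q H.
Proof.
rewrite /height -[p \in Q]/(p \in enum_fset Q).
elim: (enum_fset Q) => [//|x s IH]; rewrite inE big_cons le_max.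
case/orP => [/eqP ->|/IH ->]; by rewrite ?lexx ?orbT.
Qed.

Lemma height_le (Q : {fset pt}) H b : 0 <= b ->
  (forall p, p \in Q -> dist p H <= b) -> height Q H <= b.
Proof.
move=> b0; rewrite /height -[forall p, p \in Q -> _]/(forall p, p \in enum_fset Q -> _).
elim: (enum_fset Q) => [|x s IH] h; first by rewrite big_nil.
rewrite big_cons ge_max h ?inE ?eqxx //=.
by apply: IH => p ps; apply: h; rewrite inE ps orbT.
Qed.

End Dist.
Section LS.
Variables (R : realType) (d : nat).
Local Notation pt := 'rV[R]_d.
Local Open Scope fset_scope.

Lemma greedy_card (P : {fset pt}) n C : greedy_reach P n C -> #|` C| = n.
Proof.
elim=> [|m C0 C1 _ IH [p [_ pC0 -> _]]]; first by rewrite cardfs0.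
by rewrite cardfsU1 pC0 IH.
Qed.

Lemma swap_card (P : {fset pt}) eps C C' : swap_step P eps C C' -> #|` C'| = #|` C|.
Proof.
move=> [q [p [_ qC pC -> _]]].
rewrite cardfsU1 (cardfsD1 p C) pC in_fsetD1 (negbTE qC) andbF.
by [].
Qed.

Lemma rt_card (P : {fset pt}) eps C C' :
  clos_refl_trans _ (swap_step P eps) C C' -> #|` C'| = #|` C|.
Proof.
elim=> [x y /swap_card //| x // | x y z _ h1 _ h2]; by rewrite h2 h1.
Qed.

End LS.
Lemma sqrt_aux (R : realType) (A B g e : R) : 0 <= A -> 0 <= B -> 0 < B * g -> 0 < e ->
  Num.sqrt (A * g) < e * Num.sqrt (B * g) -> 0 < g /\ A < e ^+ 2 * B.
Proof.
move=> A0 B0 Bg e0 h.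
have g0 : 0 < g by nra.
split => //.
move: h; rewrite -{1}(ger0_norm (ltW e0)) -sqrtr_sqr -sqrtrM ?sqr_ge0 //.
rewrite ltr_sqrt; last by rewrite mulr_gt0 // exprn_gt0.
by rewrite mulrA ltr_pM2r.
Qed.

Section Key.
Variables (R : realType) (d : nat).
Local Notation pt := 'rV[R]_d.
Local Open Scope fset_scope.

Lemma memE (A : {fset pt}) y : (y \in enum_fset A) = (y \in A).
Proof. by []. Qed.

Lemma rows_sub (s t : seq pt) : {subset s <= t} -> (vecs_mx s <= vecs_mx t)%MS.
Proof.
move=> st; apply/row_subP => i; rewrite row_vecs; apply: mem_vecs; apply: st.
exact: mem_nth.
Qed.

Lemma comb_sub (s : seq pt) (us : uniq s) (g : 'rV[R]_(size s)) (i : 'I_(size s)) :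
  (g *m vecs_mx s - g 0 i *: nth 0 s i <= vecs_mx (rem (nth 0 s i) s))%MS.
Proof.
rewrite mulmx_sum_row (bigD1 i) //= row_vecs addrAC subrr add0r.
apply: summx_sub => j ji; apply: scalemx_sub; rewrite row_vecs; apply: mem_vecs.
by rewrite (mem_rem_uniq _ us) inE /= nth_uniq // ji mem_nth.
Qed.

Lemma key_i (C : {fset pt}) (q : pt) (eps : R) (i : 'I_(size (enum_fset C))) :
  0 < eps -> q \notin C ->
  (forall x, x \in C -> VOL (q |` (C `\ x)) < (1 + eps) * VOL C) ->
  0 < G (enum_fset C) ->
  let x := nth 0 (enum_fset C) i in
  let Ni := vecs_mx (rem x (enum_fset C)) in
  [/\ Ni *m Ni^T \in unitmx, 0 < nsq (res Ni x) &
      nsq (res Ni q) < (1 + eps) ^+ 2 * nsq (res Ni x)].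
Proof.
move=> e0 qC hloc hG x Ni.
set c := enum_fset C.
have xC : x \in C by rewrite -memE mem_nth.
have uc : uniq c := fset_uniq C.
have p1 : perm_eq c (x :: rem x c) by exact: perm_to_rem.
have p2 : perm_eq (enum_fset (q |` (C `\ x))) (q :: rem x c).
  apply: uniq_perm; [exact: fset_uniq| |].
    rewrite /= rem_uniq // andbT; apply: contra qC => /mem_rem; by rewrite memE.
  move=> y; rewrite memE in_fset1U in_fsetD1 in_cons (mem_rem_uniq _ uc) inE.
  by rewrite memE.
have hG' : 0 < G (x :: rem x c) by rewrite -(G_perm p1).
have uNi : Ni *m Ni^T \in unitmx.
  apply: (@unit_gram_col _ _ _ _ x); rewrite unitmxE unitfE -vecs_cons.
  by rewrite -/(G _) gt_eqF.
have e1 : G (x :: rem x c) = nsq (res Ni x) * G (rem x c).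
  by rewrite /G vecs_cons schur.
have e2 : G (q :: rem x c) = nsq (res Ni q) * G (rem x c).
  by rewrite /G vecs_cons schur.
have := hloc x xC; rewrite !VOLE (G_perm p2) (G_perm p1) e1 e2.
move=> hv.
have e0' : (0 < 1 + eps)%R by rewrite addr_gt0.
have hBg : 0 < nsq (res Ni x) * G (rem x c) by rewrite -e1.
have [g0 h] := sqrt_aux (nsq_ge0 _) (nsq_ge0 _) hBg e0' hv.
split => //.
by move: hG'; rewrite e1 pmulr_lgt0.
Qed.

End Key.

Lemma lemma4p1_aux (R : realType) (d k : nat) (eps : R)
    (P C : {fset 'rV[R]_d}) (H : 'M[R]_d) :
  (1 <= k)%N -> (k <= d)%N -> 0 < eps ->
  LS_output P k eps C ->
  \rank H = k.-1 ->
  height P H / (2 * k%:R * (1 + eps)) <= height C H.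
Proof.
move=> k1 kd e0 [C0 [hg hrt hno]] hrank.
have cardC : size (enum_fset C) = k by rewrite (rt_card hrt) (greedy_card hg).
set δ := height C H.
have δ0 : 0 <= δ := height_ge0 C H.
have hk : (1 <= k%:R :> R) by rewrite ler1n.
have e0' : (0 < 1 + eps)%R by rewrite addr_gt0.
have K0 : (0 < 2 * k%:R * (1 + eps))%R.
  by rewrite mulr_gt0 // mulr_gt0 // (lt_le_trans ltr01 hk).
rewrite ler_pdivrMr //.
apply: height_le; first by rewrite mulr_ge0 // ltW.
move=> q qP.
case: (boolP (q \in C)) => qC.
  have := le_height H qC; rewrite -/δ => h.
  apply: le_trans h _; rewrite ler_peMr //.
  nra.
have hloc : forall x, x \in C -> VOL (q |` (C `\ x))%fset < (1 + eps) * VOL C.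
  move=> x xC; rewrite ltNge; apply/negP => hle; apply: hno.
  by exists (q |` (C `\ x))%fset; exists q, x; split.
set c := enum_fset C.
have n0 : (0 < size c)%N by rewrite cardC.
have uc : uniq c := fset_uniq C.
have hG : 0 < G c.
  have c0C : nth 0 c 0 \in C by rewrite -memE mem_nth.
  have := hloc _ c0C; rewrite !VOLE => h.
  rewrite -sqrtr_gt0; have := le_lt_trans (sqrtr_ge0 _) h.
  by rewrite pmulr_rgt0.
set M := vecs_mx c.
have uM : M *m M^T \in unitmx by rewrite unitmxE unitfE gt_eqF.
set a := q *m M^T *m invmx (M *m M^T).
set r := res M q.
have qdec : q = a *m M + r by rewrite /r resE /PiN !mulmxA addrC subrK.
have per : forall i : 'I_(size c), `|a 0 i| < 1 + eps /\ nsq r < (1 + eps) ^+ 2 * nsq (res (vecs_mx (rem (nth 0 c i) c)) (nth 0 c i)).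
  move=> i; have [uNi pos hlt] := key_i i e0 qC hloc hG.
  move: uNi pos hlt.
  set x := nth 0 c i; set Ni := vecs_mx (rem x c) => uNi pos hlt.
  have NiM : (Ni <= M)%MS by apply: rows_sub => y /mem_rem.
  have rNi : res Ni r = r.
    by apply: res_id; apply: orth_sub (res_orthN uM q) NiM.
  have hq : res Ni q = a 0 i *: res Ni x + r.
    rewrite -rNi -resZ -resD; apply: (res_eq uNi).
    have -> : q - (a 0 i *: x + r) = a *m M - a 0 i *: x.
      by rewrite {1}qdec opprD addrACA subrr addr0.
    exact: comb_sub.
  have xM : (x <= M)%MS by apply: mem_vecs; rewrite mem_nth.
  have rxM : (res Ni x <= M)%MS.
    have -> : res Ni x = x - (x - res Ni x) by rewrite opprB addrC subrK.
    by rewrite addmx_sub // eqmx_opp (submx_trans (@res_sub _ _ _ Ni x)).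
  have orth : dot (a 0 i *: res Ni x) r = 0.
    by rewrite dotC; apply: (res_orth_dot uM); rewrite scalemx_sub.
  move: hlt; rewrite hq pythag // nsqZ => hlt.
  have Y0 := nsq_ge0 r.
  have hn := real_normK (num_real (a 0 i)).
  have an0 := normr_ge0 (a 0 i).

  split; last by nra.
  rewrite ltNge; apply/negP => ha.
  have : (1 + eps) ^+ 2 <= `|a 0 i| ^+ 2 by rewrite lerXn2r // ?nnegrE ?ltW.
  rewrite hn; nra.
set B := row_base H.
have uB := unit_row_base H.
set A := M *m PiN B.
have nuA : ~~ (A *m A^T \in unitmx).
  apply/negP; rewrite -row_free_unit => /eqP hr.
  have h1 : (\rank (A *m A^T) <= \rank A)%N by exact: mxrankM_maxl.
  have h2 : (\rank A <= \rank B)%N.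
    by rewrite /A /PiN mulmxA; apply: mxrankM_maxr.
  have h3 : \rank B = k.-1 by rewrite /B (eq_row_base H).
  move: h1 h2; rewrite hr h3; have cc : size c = k := cardC.
  move: (\rank A) cc k1 => ra ->; case: (k) => [//|k2] _ h1 h2.
  by move: (leq_trans h1 h2); rewrite /= ltnn.
have [b bn0 bA] : exists2 b : 'rV_(size c), b != 0 & b *m A = 0.
  move: nuA; rewrite unitmxE unitfE negbK => /det0P [b bn0 hb]; exists b => //.
  apply: nsq_eq0; by rewrite /nsq /dot trmx_mul mulmxA -(mulmxA b A) hb mul0mx mxE.
pose i0 := Ordinal n0.
case: (@arg_maxP _ _ _ i0 predT (fun i => `|b 0 i|) isT) => j _ hj.
have bj0 : b 0 j != 0.
  apply: contra bn0 => /eqP bj; apply/eqP/matrixP => u v; rewrite (ord1 u) mxE.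
  have := hj v isT; rewrite bj normr0 => h; apply/eqP.
  by rewrite -normr_eq0 eq_le normr_ge0 andbT; exact: h.
set g := (b 0 j)^-1 *: b.
have gj : g 0 j = 1 by rewrite mxE mulVf.
have gle : forall v, `|g 0 v| <= 1.
  move=> v; rewrite mxE normrM normfV mulrC ler_pdivrMr ?normr_gt0 // mul1r.
  exact: hj.
set w := g *m M.
have wA : w *m PiN B = 0 by rewrite /w -mulmxA -/A -scalemxAl bA scaler0.
have resBw : res B w = w by rewrite resE wA subr0.
have hdist : forall v : 'I_(size c), enorm (res B (row v M)) <= δ.
  by move=> v; rewrite row_vecs -distE; apply: le_height; rewrite -memE mem_nth.
have wle : enorm w <= (size c)%:R * δ.
  rewrite -resBw /w mulmx_sum_row res_sum; apply: le_trans (enorm_sum _) _.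
  have : \sum_(v < size c) enorm (res B (g 0 v *: row v M)) <= \sum_(v < size c) δ.
    apply: ler_sum => v _; rewrite resZ enormZ -[δ]mul1r.
    exact: ler_pM (normr_ge0 _) (enorm_ge0 _) (gle v) (hdist v).
  by rewrite sumr_const card_ord mulr_natl.
have [uNj _ _] := key_i j e0 qC hloc hG.
move: uNj; set xj := nth 0 c j; set Nj := vecs_mx (rem xj c) => uNj.
have rj : enorm (res Nj xj) <= (size c)%:R * δ.
  have : res Nj w = res Nj xj.
    apply: (res_eq uNj); have := comb_sub uc g j; by rewrite gj scale1r.
  move=> <-; apply: le_trans wle; apply: enorm_le; exact: res_le.
have rle : enorm r <= (1 + eps) * ((size c)%:R * δ).
  have [_ h2] := per j.
  apply: le_trans (ler_wpM2l (ltW e0') rj).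
  rewrite -[X in X * _](ger0_norm (ltW e0')) -enormZ; apply: enorm_le.
  by rewrite nsqZ ltW.
rewrite distE {1}qdec resD mulmx_sum_row res_sum.
apply: le_trans (enormD _ _) _.
have s1 : enorm (\sum_(v < size c) res B (a 0 v *: row v M)) <= (size c)%:R * ((1 + eps) * δ).
  apply: le_trans (enorm_sum _) _.
  have : \sum_(v < size c) enorm (res B (a 0 v *: row v M)) <= \sum_(v < size c) ((1 + eps) * δ).
    apply: ler_sum => v _; rewrite resZ enormZ.
    have [hv _] := per v.
    exact: ler_pM (normr_ge0 _) (enorm_ge0 _) (ltW hv) (hdist v).
  by rewrite sumr_const card_ord mulr_natl.
have s2 : enorm (res B r) <= enorm r by apply: enorm_le; exact: res_le.
have ck : (size c)%:R = k%:R :> R by rewrite cardC.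
rewrite ck in s1 rle.
have E : δ * (2 * k%:R * (1 + eps)) = k%:R * ((1 + eps) * δ) + (1 + eps) * (k%:R * δ) by ring.
rewrite E; apply: lerD => //; exact: le_trans s2 rle.
Qed.

Local Open Scope fset_scope.

Theorem lemma4p1 (R : realType) (d k : nat) (eps : R)
    (P C : {fset 'rV[R]_d}) (H : 'M[R]_d) :
  (1 <= k)%N -> (k <= d)%N -> 0 < eps ->
  LS_output P k eps C ->
  \rank H = k.-1 ->
  height P H / (2 * k%:R * (1 + eps)) <= height C H.
Proof. exact: lemma4p1_aux. Qed.
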